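(* Let $\Lambda\subset[0,+\infty)$ be a decreasing gap asymptotically dense set and let $f:\mathbb{R}\to[0,+\infty)$ be continuous. If $x$ is an interior point of $C(f,\Lambda)$, then \[ \mu\big([x,+\infty)\cap D(f,\Lambda)\big)=0 . \]
   Context: $\mu$ denotes one-dimensional Lebesgue measure. For a discrete set $\Lambda\subset[0,\infty)$ and $f:\mathbb{R}\to[0,+\infty)$, put $s(x)=\sum_{\lambda\in\Lambda}f(x+\lambda)$, $C(f,\Lambda)=\{x: s(x)<\infty\}$ and $D(f,\Lambda)=\{x: s(x)=\infty\}$. An unbounded infinite discrete set $\Lambda=\{\lambda_1<\lambda_2<\cdots\}$ is a decreasing gap asymptotically dense set if the gaps $d_n=\lambda_n-\lambda_{n-1}$ tend to $0$ monotone decreasingly. *)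

(* Defs.v *)
From HB Require Import structures.
From mathcomp Require Import all_boot all_order all_algebra.
From mathcomp Require Import all_classical all_reals all_analysis.
Set Implicit Arguments. Unset Strict Implicit. Unset Printing Implicit Defensive.
Import Order.TTheory GRing.Theory Num.Theory.
Import numFieldNormedType.Exports.
Local Open Scope classical_set_scope.
Local Open Scope ring_scope.

(* Lambda = {lam 0 < lam 1 < ...} is encoded by its strictly increasing
   enumeration lam : nat -> R. *)
Definition decreasing_gap_asymptotically_dense {R : realType} (lam : nat -> R) : Prop :=
  [/\ 0 <= lam 0%N,
      (forall n, lam n < lam n.+1),
      (forall M : R, exists n, M < lam n),
      (forall n, lam n.+2 - lam n.+1 <= lam n.+1 - lam n) &
      ((fun n => lam n.+1 - lam n) @ \oo --> (0 : R))].

Definition sfun {R : realType} (f : R -> R) (lam : nat -> R) (x : R) : \bar R :=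
  (\sum_(0 <= n <oo) (f (x + lam n))%:E)%E.

Definition Cset {R : realType} (f : R -> R) (lam : nat -> R) : set R :=
  [set x | (sfun f lam x < +oo)%E].

Definition Dset {R : realType} (f : R -> R) (lam : nat -> R) : set R :=
  [set x | sfun f lam x = +oo%E].

(* Main.v *)
Require Import Defs.
From HB Require Import structures.
From mathcomp Require Import all_boot all_order all_algebra.
From mathcomp Require Import all_classical all_reals all_analysis.
From mathcomp Require Import measurable_realfun lra.
Import Order.TTheory GRing.Theory Num.Theory.
Import numFieldNormedType.Exports.
Local Open Scope classical_set_scope.
Local Open Scope ring_scope.
Lemma lam_lt (R : realType) (lam : nat -> R) :
  (forall n, lam n < lam n.+1) -> forall i j, (i < j)%N -> lam i < lam j.
Proof.
move=> h i j ij; apply: (@homo_ltn _ lam (fun a b => a < b)) => //.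
by move=> y x z; exact: lt_trans.
Qed.

Lemma lam_le (R : realType) (lam : nat -> R) :
  (forall n, lam n < lam n.+1) -> forall i j, (i <= j)%N -> lam i <= lam j.
Proof.
move=> h i j; rewrite leq_eqVlt => /predU1P[->//|ij].
exact/ltW/lam_lt.
Qed.

Lemma gap_anti (R : realType) (lam : nat -> R) :
  (forall n, lam n.+2 - lam n.+1 <= lam n.+1 - lam n) ->
  forall i j, (i <= j)%N -> lam j.+1 - lam j <= lam i.+1 - lam i.
Proof.
move=> h i j ij.
apply: (@homo_leq _ (fun n => lam n.+1 - lam n) (fun a b => b <= a)) => //.
by move=> y x z a b; exact: le_trans b a.
Qed.

Lemma bracket (R : realType) (lam : nat -> R) :
  (forall n, lam n < lam n.+1) -> (forall M : R, exists n, M < lam n) ->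
  forall t, lam 0%N <= t -> exists m, lam m <= t /\ t < lam m.+1.
Proof.
move=> h hM t t0; have [K tK] := hM t.
elim: K tK => [|K IH] tK; first by move: (lt_le_trans tK t0); rewrite ltxx.
have [tK'|Kt] := ltP t (lam K); first exact: IH.
by exists K.
Qed.

Lemma phi_prop (R : realType) (lam : nat -> R) (c : R) (phi : nat -> nat) :
  (forall n, lam n < lam n.+1) ->
  (forall n, lam n.+2 - lam n.+1 <= lam n.+1 - lam n) -> 0 <= c ->
  (forall n, lam (phi n) <= lam n + c /\ lam n + c < lam (phi n).+1) ->
  (forall n, (n <= phi n)%N) /\ injective phi.
Proof.
move=> h hg c0 hp.
have le_phi n : (n <= phi n)%N.
  rewrite leqNgt; apply/negP => pn.
  have := @lam_le _ _ h _ _ pn; have [_ +] := hp n => /lt_le_trans /[apply].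
  by rewrite ltNge lerDl c0.
split => //.
suff H n n' : (n < n')%N -> phi n = phi n' -> False.
  move=> n n' e; case: (ltngtP n n') => // nn'; first by case: (H _ _ nn' e).
  by case: (H _ _ nn' (esym e)).
move=> nn' e.
have := @gap_anti _ _ hg _ _ (le_phi n).
have [a1 a2] := hp n; have [b1 b2] := hp n'.
rewrite -e in b1 b2.
have : lam n.+1 <= lam n' by exact: (@lam_le _ _ h).
move=> h3 h4.
have : lam (phi n).+1 <= lam n' + c.
  have : lam (phi n).+1 - lam (phi n) + lam (phi n) <= lam n.+1 - lam n + (lam n + c).
    exact: lerD.
  have -> : lam (phi n).+1 - lam (phi n) + lam (phi n) = lam (phi n).+1 by rewrite subrK.
  have -> : lam n.+1 - lam n + (lam n + c) = lam n.+1 + c.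
    by rewrite addrA subrK.
  move=> h5; apply: (le_trans h5); rewrite lerD2r //.
by rewrite leNgt b2.
Qed.


Lemma series_inj (R : realType) (u : nat -> \bar R) (phi : nat -> nat) :
  (forall n, (0 <= u n)%E) -> injective phi ->
  (\sum_(n <oo) u (phi n) <= \sum_(n <oo) u n)%E.
Proof.
move=> u0 iphi.
rewrite !nneseries_esumT //.
rewrite -(esum_image setT phi u); last by move=> a b _ _; exact: iphi.
apply: ge_ereal_sup => _ [X [finX XI] <-].
by apply: esum_ge; exists X.
Qed.
Definition Hint {R : realType} (f : R -> R) (l p : R) : \bar R :=
  (\int[@lebesgue_measure R]_(y in `[p, (p + l)%R]) (f y)%:E)%E.

Lemma mEf (R : realType) (f : R -> R) (D : set R) : continuous f ->
  measurable_fun D (EFin \o f).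
Proof.
move=> cf; apply/measurable_EFinP; apply: measurable_funS (continuous_measurable_fun cf) => //.
Qed.

Lemma Hint_ge0 (R : realType) (f : R -> R) l p : (forall y, 0 <= f y) -> (0 <= Hint f l p)%E.
Proof. by move=> f0; apply: integral_ge0 => y _; rewrite lee_fin. Qed.

Lemma Hint_fin (R : realType) (f : R -> R) l p : continuous f -> (Hint f l p < +oo)%E.
Proof.
move=> cf.
have : (@lebesgue_measure R).-integrable `[p, (p + l)%R] (EFin \o f).
  apply: continuous_compact_integrable; first exact: segment_compact.
  exact: continuous_subspaceT.
move=> hi.
have : (Hint f l p) \is a fin_num by apply: integrable_fin_num => //.
by move=> /fin_numPlt/andP[_].
Qed.

Lemma Hint_cover (R : realType) (f : R -> R) l u v p :
  (forall y, 0 <= f y) -> continuous f ->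
  u <= p -> v <= u + l -> p <= v ->
  (Hint f l p <= Hint f l u + Hint f l v)%E.
Proof.
move=> f0 cf up vu pv; rewrite /Hint.
set A := [set` `[u, (u + l)%R]]; set B := [set` `[v, (v + l)%R]].
have mA : measurable A by exact: measurable_itv.
have mB : measurable B by exact: measurable_itv.
have sub : [set` `[p, (p + l)%R]] `<=` A `|` (B `\` A).
  move=> y /=; rewrite !in_itv/= => /andP[py yp].
  have [yl|yl] := leP y (u + l).
    by left; rewrite /A /= in_itv/=; apply/andP; split => //; lra.
  right; split; first by rewrite /B /= in_itv/=; apply/andP; split; lra.
  by rewrite /A /= in_itv/= => /andP[_]; lra.
apply: (@le_trans _ _ (\int[lebesgue_measure]_(y in A `|` (B `\` A)) (f y)%:E)%E).
  apply: ge0_subset_integral => //.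
  - by apply: measurableU => //; exact: measurableD.
  - exact: mEf.
  - by move=> y _; rewrite lee_fin.
have mBA : measurable (B `\` A) by exact: measurableD.
have h1 := @ge0_subset_integral _ _ _ (@lebesgue_measure R) _ _ mBA mB (EFin \o f)
  (@mEf R f _ cf) (fun y _ => f0 y) (@subDsetl _ B A).
rewrite ge0_integral_setU //.
- by rewrite leeD2l.
- exact: mEf.
- by move=> y _; rewrite lee_fin.
- by rewrite disj_set2E setDIK.
Qed.
Lemma trans_int (R : realType) (f : R -> R) (u v t : R) : (u < v)%R -> continuous f ->
  (\int[@lebesgue_measure R]_(y in `[u%R, v%R]) (f (y + t))%:E = \int[@lebesgue_measure R]_(y in `[(u + t)%R, (v + t)%R]) (f y)%:E)%E.
Proof.
move=> uv cf.
have sh : derive1 (fun y : R => y + t) = cst 1%R.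
  apply/funext => y; rewrite derive1E.
  by rewrite deriveD// derive_id derive_cst addr0.
have := @integration_by_substitution_increasing R (fun y => y + t) f u v (ltW uv).
rewrite sh /=.
move=> ->//.
- by apply: eq_integral => y _; rewrite /= mulr1.
- by move=> y z _ _; rewrite ltrD2r.
- by move=> y _; exact: cst_continuous.
- exact: is_cvg_cst.
- exact: is_cvg_cst.
- split.
  + by move=> y _; apply: derivableD => //; exact: derivable_id.
  + apply: cvg_at_right_filter; apply: continuousD => //; exact: cvg_cst.
  + apply: cvg_at_left_filter; apply: continuousD => //; exact: cvg_cst.
- exact: continuous_subspaceT.
Qed.

Lemma cont_shift (R : realType) (f : R -> R) (c : R) : continuous f ->
  continuous (fun y => f (y + c)).
Proof.
move=> cf y; apply: (continuous_comp (f := fun y => y + c) (g := f)).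
  by apply: cvgD; [exact: cvg_id|exact: cvg_cst].
exact: cf.
Qed.

Lemma sfun_meas (R : realType) (f : R -> R) (lam : nat -> R) (D : set R) :
  (forall y, 0 <= f y) -> continuous f -> measurable_fun D (Defs.sfun f lam).
Proof.
move=> f0 cf; rewrite /Defs.sfun.
apply: (@ge0_emeasurable_sum _ _ _ D (fun n y => (f (y + lam n))%:E) xpredT).
- by move=> k y _ _; rewrite lee_fin.
- by move=> k _; apply: mEf; exact: cont_shift.
Qed.

Lemma int_sfun (R : realType) (f : R -> R) (lam : nat -> R) (u l : R) :
  0 < l -> (forall y, 0 <= f y) -> continuous f ->
  (\int[@lebesgue_measure R]_(y in `[u, (u + l)%R]) Defs.sfun f lam y =
   \sum_(n <oo) Hint f l (u + lam n))%E.
Proof.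
move=> l0 f0 cf; rewrite /Defs.sfun integral_nneseries //.
- apply: eq_eseriesr => n _; rewrite trans_int //; last by lra.
  by rewrite /Hint addrAC.
- by move=> n; apply: mEf; exact: cont_shift.
- by move=> n y _; rewrite lee_fin.
Qed.

Lemma null_set (R : realType) (s : R -> \bar R) (W : set R) :
  measurable W -> measurable_fun W s -> (forall y, (0 <= s y)%E) ->
  (\int[@lebesgue_measure R]_(y in W) s y < +oo)%E ->
  @lebesgue_measure R (W `&` [set y | s y = +oo%E]) = 0%E.
Proof.
move=> mW ms s0 fin.
have mE : measurable (W `&` [set y | s y = +oo%E]).
  exact: (ms mW [set +oo%E] (emeasurable_set1 _)).
apply/eqP; apply: contraTT fin => mE0.
rewrite -leNgt.
have : (\int[@lebesgue_measure R]_(y in W `&` [set y | s y = +oo%E]) s y <=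
        \int[@lebesgue_measure R]_(y in W) s y)%E.
  by apply: ge0_subset_integral => //; exact: subIsetl.
apply: le_trans.
rewrite (eq_integral (cst +oo%E)); last first.
  by move=> y; rewrite inE => -[_ ->].
rewrite integral_cst // gt0_mulye //.
by rewrite lt_neqAle eq_sym mE0 measure_ge0.
Qed.

Lemma lee_nneseriesN (R : realType) (u v : nat -> \bar R) N :
  (forall i, (N <= i)%N -> (0 <= u i)%E) -> (forall i, (N <= i)%N -> (u i <= v i)%E) ->
  (\sum_(N <= i <oo) u i <= \sum_(N <= i <oo) v i)%E.
Proof.
move=> u0 uv; apply: lee_lim.
- by apply: is_cvg_nneseries => i Ni _; exact: u0.
- by apply: is_cvg_nneseries => i Ni _; exact: le_trans (u0 _ Ni) (uv _ Ni).
- apply: nearW => n; rewrite big_nat_cond [X in (_ <= X)%E]big_nat_cond.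
  by apply: lee_sum => i /andP[/andP[Ni _] _]; exact: uv.
Qed.

Lemma core (R : realType) (lam : nat -> R) (f : R -> R) (l a y0 : R) :
  (forall n, lam n < lam n.+1) -> (forall M : R, exists n, M < lam n) ->
  (forall n, lam n.+2 - lam n.+1 <= lam n.+1 - lam n) ->
  (fun n => lam n.+1 - lam n) @ \oo --> (0:R) ->
  (forall y, 0 <= f y) -> continuous f -> 0 < l -> a <= y0 ->
  (\sum_(m <oo) Hint f l (a + lam m) < +oo)%E ->
  (\sum_(n <oo) Hint f l (y0 + lam n) < +oo)%E.
Proof.
move=> hinc hunb hgap hcvg f0 cf l0 ay S.
have l20 : 0 < l / 2 by rewrite divr_gt0.
have [N _ hN] : exists2 N : nat, True & forall m, (N <= m)%N -> lam m.+1 - lam m <= l / 2.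
  have := cvgr_dist_le _ _ hcvg _ l20.
  move=> -[N _ hN]; exists N => // m /hN /=.
  by rewrite sub0r normrN => /(le_trans (ler_norm _)).
have H1 n : lam 0%N <= lam n + (y0 - a).
  have := @lam_le _ _ hinc _ _ (leq0n n); lra.
have [phi1 hp1] := @choice nat nat
  (fun n m => lam m <= lam n + (y0 - a) /\ lam n + (y0 - a) < lam m.+1)
  (fun n => @bracket _ _ hinc hunb _ (H1 n)).
have H2 n : lam 0%N <= lam n + l.
  have := @lam_le _ _ hinc _ _ (leq0n n); lra.
have [phi2 hp2] := @choice nat nat
  (fun n m => lam m <= lam n + l /\ lam n + l < lam m.+1)
  (fun n => @bracket _ _ hinc hunb _ (H2 n)).
have c0 : 0 <= y0 - a by rewrite subr_ge0.
have [le1 inj1] := @phi_prop _ _ _ _ hinc hgap c0 hp1.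
have [le2 inj2] := @phi_prop _ _ _ _ hinc hgap (ltW l0) hp2.
set u := fun n => Hint f l (a + lam n).
have u0 n : (0 <= u n)%E by exact: Hint_ge0.
have key n : (N <= n)%N ->
    (Hint f l (y0 + lam n) <= u (phi1 n) + u (phi2 (phi1 n)))%E.
  move=> Nn; apply: Hint_cover => //.
  - have [a1 a2] := hp1 n; lra.
  - have [b1 b2] := hp2 (phi1 n); lra.
  - have g1 := hN _ (leq_trans Nn (le1 n)).
    have g2 := hN _ (leq_trans (leq_trans Nn (le1 n)) (le2 (phi1 n))).
    have [a1 a2] := hp1 n; have [b1 b2] := hp2 (phi1 n); lra.
rewrite (nneseries_split 0 N); last by move=> k _; exact: Hint_ge0.
rewrite add0n; apply: lte_add_pinfty.
  by apply: lte_sum_pinfty => k _; exact: Hint_fin.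
apply: (le_lt_trans (@lee_nneseriesN _ _ (fun n => u (phi1 n) + u (phi2 (phi1 n))) _ _ key)).
  by move=> i _; exact: Hint_ge0.
apply: (@le_lt_trans _ _ (\sum_(0 <= n <oo) (u (phi1 n) + u (phi2 (phi1 n))))%E).
  rewrite [X in (_ <= X)%E](nneseries_split 0 N); last by move=> k _; rewrite adde_ge0.
  rewrite add0n; apply: leeDr; apply: sume_ge0 => k _; exact: adde_ge0.
rewrite nneseriesD //.
apply: lte_add_pinfty.
  exact: le_lt_trans (@series_inj _ _ _ u0 inj1) S.
apply: le_lt_trans (@series_inj _ _ _ u0 (inj_comp inj2 inj1)) S.
Qed.

Lemma ps_le (R : realType) (f : R -> R) (lam : nat -> R) y n :
  (forall y, 0 <= f y) ->
  ((\sum_(i < n) f (y + lam i))%:E <= Defs.sfun f lam y)%E.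
Proof.
move=> f0; rewrite /Defs.sfun -sumEFin.
have := @nneseries_lim_ge R (fun i => (f (y + lam i))%:E) xpredT 0%N n.
by rewrite big_mkord; apply => k _ _; rewrite lee_fin.
Qed.

Lemma sfun_le (R : realType) (f : R -> R) (lam : nat -> R) y (c : R) :
  (forall y, 0 <= f y) -> (forall n, \sum_(i < n) f (y + lam i) <= c) ->
  (Defs.sfun f lam y <= c%:E)%E.
Proof.
move=> f0 hc; rewrite /Defs.sfun.
apply: lime_le; first by apply: is_cvg_nneseries => k _ _; rewrite lee_fin f0.
apply: nearW => n; rewrite big_mkord sumEFin lee_fin; exact: hc.
Qed.

Lemma psum_cont (R : realType) (f : R -> R) (lam : nat -> R) n :
  continuous f -> continuous (fun y => \sum_(i < n) f (y + lam i)).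
Proof.
move=> cf; elim: n => [|n IH].
  have -> : (fun y => \sum_(i < 0) f (y + lam i)) = cst 0.
    by apply/funext => y; rewrite big_ord0.
  by move=> y; exact: cvg_cst.
have -> : (fun y => \sum_(i < n.+1) f (y + lam i)) =
    (fun y => \sum_(i < n) f (y + lam i) + f (y + lam n)).
  by apply/funext => y; rewrite big_ord_recr.
move=> y; apply: cvgD; first exact: IH.
exact: cont_shift.
Qed.

Lemma baire_step (R : realType) (lam : nat -> R) (f : R -> R) (x d : R) :
  (forall y, 0 <= f y) -> continuous f -> 0 < d ->
  ball x d `<=` Cset f lam ->
  exists a l (k : nat), [/\ 0 < l, a + l <= x &
    forall y, a <= y -> y <= a + l -> (Defs.sfun f lam y <= k%:R%:E)%E].
Proof.
move=> f0 cf d0 bC.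
set g := fun n y => \sum_(i < n) f (y + lam i).
set A := fun k : nat => [set y | (x - d / 2 <= y /\ y <= x - d / 4) /\
   forall n, g n y <= k%:R].
suff [k [z [e [e0 sub]]]] : exists k z e, 0 < e /\ `[z - e, z + e] `<=` A k.
  exists (z - e), (e + e), k; split.
  - by rewrite addr_gt0.
  - have : A k (z + e) by apply: sub; rewrite /= in_itv /=; apply/andP; split; lra.
    by move=> [[_ h] _]; lra.
  - move=> y h1 h2.
    have : A k y by apply: sub; rewrite /= in_itv /=; apply/andP; split; lra.
    move=> [_ h]; exact: sfun_le.
apply: contrapT => H.
have dense_k k : dense (~` A k).
  move=> O [z Oz] oO; apply: contrapT => nO.
  have sub : O `<=` A k.
    move=> y Oy; apply: contrapT => nA; apply: nO; exists y; split => //.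
  have /nbhs_ballP[e e0 be] : nbhs z O by exact: open_nbhs_nbhs.
  apply: H; exists k, z, (e / 2); split; first by rewrite divr_gt0.
  move=> y /=; rewrite in_itv /= => /andP[h1 h2]; apply/sub/be.
  move: e0 => /= e0.
  rewrite ball_itv /= in_itv /=; apply/andP; split; lra.
have closedA k : closed (A k).
  have -> : A k = ([set y | x - d / 2 <= y] `&` [set y | y <= x - d / 4]) `&`
      \bigcap_(n in setT) (g n @^-1` [set r | r <= k%:R]).
    apply/seteqP; split => y /=.
    - by move=> [[h1 h2] h3]; split; [split|move=> n _; exact: h3].
    - by move=> [[h1 h2] h3]; split; [split|move=> n; exact: h3 n I].
  apply: closedI.
    have h1 := @closed_ge R (x - d / 2).
    have h2 := @closed_le R (x - d / 4).
    exact: closedI h1 h2.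
  apply: closed_bigI => n _.
  have h3 := @closed_le R k%:R.
  have h4 : {in ~` g n @^-1` [set r | r <= k%:R], continuous (g n)}.
    by move=> y _; exact: (@psum_cont R f lam n cf).
  exact: preimage_closed h4 h3.
have openU k : open (~` A k) by rewrite openC.
have := @Baire R R (fun k => ~` A k) (fun k => conj (openU k) (dense_k k)).
move=> /(_ [set` `]x - d / 2, x - d / 4[ ]).
case.
- exists (x - d / 3); rewrite /= in_itv /=; apply/andP; split; lra.
- exact: itv_open.
move=> z [/= + hz]; rewrite in_itv /= => /andP[z1 z2].
have : Cset f lam z.
  apply: bC; rewrite ball_itv /= in_itv /=; apply/andP; split; lra.
rewrite /Cset /= => sz.
have s0 : (0 <= Defs.sfun f lam z)%E by apply: nneseries_ge0 => k _ _; rewrite lee_fin.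
set r := fine (Defs.sfun f lam z).
have rE : Defs.sfun f lam z = r%:E.
  by rewrite /r fineK // ge0_fin_numE.
apply: (hz (Num.truncn r).+1 I); split; first by split; lra.
move=> n; have := @ps_le _ f lam z n f0; rewrite rE lee_fin => h.
by apply: (le_trans h); apply/ltW; exact: truncnS_gt.
Qed.

Theorem theorem3p4 (R : realType) (lam : nat -> R) (f : R -> R) (x : R) :
  decreasing_gap_asymptotically_dense lam ->
  (forall y, 0 <= f y) ->
  continuous f ->
  interior (Cset f lam) x ->
  (@lebesgue_measure R ([set y : R | (x <= y)%R] `&` Dset f lam) = 0)%E.
Proof.
move=> [h0 hinc hunb hgap hcvg] f0 cf hint.
have hn : nbhs x (Cset f lam) := hint.
have [d d0 bd] := (iffLR (nbhs_ballP _ _) hn).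
have [a [l [k [l0 alx hk]]]] := @baire_step _ lam f x d f0 cf d0 bd.
have smeas : forall D : set R, measurable_fun D (Defs.sfun f lam).
  by move=> D; exact: sfun_meas.
have sge0 : forall y, (0 <= Defs.sfun f lam y)%E.
  by move=> y; apply: nneseries_ge0 => i _ _; rewrite lee_fin.
have S : (\sum_(m <oo) Hint f l (a + lam m) < +oo)%E.
  rewrite -int_sfun //.
  apply: (@le_lt_trans _ _ (\int[@lebesgue_measure R]_(y in `[a, (a + l)%R]) (cst k%:R%:E) y)%E).
    apply: (ge0_le_integral (@lebesgue_measure R) (measurable_itv _)).
    - by move=> y _; exact: sge0.
    - exact: smeas.
    - exact: measurable_cst.
    - move=> y; rewrite /= in_itv /= => /andP[h1 h2]; exact: hk.
  have hm : (@lebesgue_measure R `[a, (a + l)%R] < +oo)%E.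
    rewrite lebesgue_measure_itv /= lte_fin ifT; last by lra.
    by rewrite -EFinD ltry.
  rewrite integral_cst //; apply: lte_mul_pinfty => //.
have Wnull : forall y0, a <= y0 ->
    @lebesgue_measure R (`[y0, (y0 + l)%R] `&` Dset f lam) = 0%E.
  move=> y0 ay; apply: null_set.
  - exact: measurable_itv.
  - exact: smeas.
  - exact: sge0.
  - rewrite int_sfun //; exact: (@core _ lam f l a y0 hinc hunb hgap hcvg f0 cf l0 ay S).
have mD : measurable (Dset f lam).
  rewrite -[Dset f lam]setTI.
  exact: (smeas setT measurableT [set +oo%E] (emeasurable_set1 _)).
set E := fun i : nat => `[x + i%:R * l, (x + i%:R * l + l)%R] `&` Dset f lam.
have mE i : measurable (E i) by apply: measurableI => //; exact: measurable_itv.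
have E0 i : @lebesgue_measure R (E i) = 0%E.
  apply: Wnull; have : 0 <= i%:R * l by rewrite mulr_ge0 // ltW.
  lra.
have mG : measurable ([set y : R | (x <= y)%R] `&` Dset f lam).
  apply: measurableI => //.
  have -> : [set y : R | (x <= y)%R] = [set` `[x, +oo[] .
    by apply/seteqP; split => y /=; rewrite in_itv /= andbT.
  exact: measurable_itv.
have sub : [set y : R | (x <= y)%R] `&` Dset f lam `<=` \bigcup_i E i.
  move=> y [/= xy Dy].
  set q := (y - x) / l.
  have q0 : 0 <= q by rewrite divr_ge0 ?subr_ge0 // ltW.
  have qE : q * l = y - x by rewrite /q divfK // gt_eqF.
  exists (Num.truncn q) => //; split => //.
  rewrite /= in_itv /=.
  have t1 : (Num.truncn q)%:R <= q by rewrite Num.Theory.truncn_le.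
  have t2 : q < (Num.truncn q).+1%:R by exact: Num.Theory.truncnS_gt.
  have h1 : (Num.truncn q)%:R * l <= q * l by rewrite ler_pM2r.
  have h2 : q * l < (Num.truncn q).+1%:R * l by rewrite ltr_pM2r.
  move: h2; rewrite -addn1 natrD mulrDl mul1r => h2.
  apply/andP; split; lra.
apply/eqP; rewrite eq_le measure_ge0 andbT.
apply: (le_trans (@measure_sigma_subadditive _ _ _ (@lebesgue_measure R) _ E mE mG sub)).
rewrite (eq_eseriesr (fun i _ => E0 i)) eseries0 //.
Qed.
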